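(* Let $d\ge1$, $K\ge2$, $n\ge1$ be integers and let $(\mathbf W^\star,\mathbf H^\star)$ be an optimal solution of $$\min_{\mathbf W\in\mathrm{OB}(d,K),\ \mathbf H\in\mathrm{OB}(d,nK)}\ \mathcal L_{\mathrm{HardMax}}(\mathbf W,\mathbf H).$$ Then $\mathbf W^\star$ is a Softmax Code, i.e. $\mathbf W^\star\in\operatorname{argmax}_{\mathbf W\in\mathrm{OB}(d,K)}\rho_{\text{one-vs-rest}}(\mathbf W)$.
   Context: $\mathrm{OB}(d,m)$ is the set of real $d\times m$ matrices with unit-norm columns. $\mathbf W\in\mathrm{OB}(d,K)$ has columns $\mathbf w_1,\dots,\mathbf w_K$; $\mathbf H\in\mathrm{OB}(d,nK)$ has columns $\mathbf h_{k,i}$, $k\in[K],i\in[n]$. $\mathcal L_{\mathrm{HardMax}}(\mathbf W,\mathbf H)=\max_{k\in[K]}\max_{i\in[n]}\max_{k'\ne k}\langle \mathbf w_{k'}-\mathbf w_k,\mathbf h_{k,i}\rangle$. For a point $\mathbf v$ and a finite set $\mathcal W$, $\operatorname{dist}(\mathbf v,\mathcal W)=\inf\{\|\mathbf v-\mathbf w\|_2:\mathbf w\in\operatorname{conv}(\mathcal W)\}$. $\rho_{\text{one-vs-rest}}(\mathbf W)=\min_{k\in[K]}\operatorname{dist}(\mathbf w_k,\{\mathbf w_j\}_{j\in[K]\setminus\{k\}})$. A Softmax Code is any maximizer of $\rho_{\text{one-vs-rest}}$ over $\mathrm{OB}(d,K)$. *)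

(* Defs.v *)
From HB Require Import structures.
From mathcomp Require Import all_boot all_order all_algebra.
From mathcomp Require Import boolp classical_sets reals.
Set Implicit Arguments. Unset Strict Implicit. Unset Printing Implicit Defensive.
Import Order.TTheory GRing.Theory Num.Theory.
Local Open Scope ring_scope.

Section Defs.
Variable R : realType.

Definition dotv (d : nat) (u v : 'cV[R]_d) : R := \sum_(l < d) u l 0 * v l 0.
Definition norm2 (d : nat) (v : 'cV[R]_d) : R := Num.sqrt (dotv v v).

Definition OB (d m : nat) (A : 'M[R]_(d, m)) : Prop :=
  forall j : 'I_m, norm2 (col j A) = 1.

Definition hcol (d K n : nat) (H : 'M[R]_(d, K * n)) (k : 'I_K) (i : 'I_n)
  : 'cV[R]_d := col (mxvec_index k i) H.

(* L_HardMax(W,H) = max_k max_i max_{k'<>k} <w_k' - w_k, h_{k,i}>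
   (a maximum over a finite set, written as its supremum) *)
Definition HardMax (d K n : nat) (W : 'M[R]_(d, K)) (H : 'M[R]_(d, K * n)) : R :=
  sup [set x : R | exists (k : 'I_K) (i : 'I_n) (k' : 'I_K),
         k' != k /\ x = dotv (col k' W - col k W) (hcol H k i)]%classic.

Definition conv_others (d K : nat) (W : 'M[R]_(d, K)) (k : 'I_K) (w : 'cV[R]_d)
  : Prop :=
  exists a : 'I_K -> R,
    (forall j, 0 <= a j) /\ a k = 0 /\ \sum_(j < K) a j = 1 /\
    w = \sum_(j < K) a j *: col j W.

Definition dist_others (d K : nat) (W : 'M[R]_(d, K)) (k : 'I_K) : R :=
  inf [set x : R | exists w, conv_others W k w /\ x = norm2 (col k W - w)]%classic.

Definition rho_ovr (d K : nat) (W : 'M[R]_(d, K)) : R :=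
  inf [set x : R | exists k : 'I_K, x = dist_others W k]%classic.

Definition softmax_code (d K : nat) (W : 'M[R]_(d, K)) : Prop :=
  OB W /\ forall W' : 'M[R]_(d, K), OB W' -> rho_ovr W' <= rho_ovr W.

Definition hardmax_optimal (d K n : nat) (W : 'M[R]_(d, K)) (H : 'M[R]_(d, K * n))
  : Prop :=
  OB W /\ OB H /\
  forall (W' : 'M[R]_(d, K)) (H' : 'M[R]_(d, K * n)),
    OB W' -> OB H' -> HardMax W H <= HardMax W' H'.

End Defs.

(* Main.v *)
Require Import Defs.
From HB Require Import structures.
From mathcomp Require Import all_boot all_order all_algebra.
From mathcomp Require Import boolp classical_sets reals.
From mathcomp Require Import ring lra.
Import Order.TTheory GRing.Theory Num.Theory.
Set Implicit Arguments. Unset Strict Implicit. Unset Printing Implicit Defensive.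
Local Open Scope ring_scope.

Section Dot.
Variable R : realType.
Variable d : nat.
Implicit Types u v w : 'cV[R]_d.

Lemma dotvC u v : dotv u v = dotv v u.
Proof. by apply: eq_bigr => l _; rewrite mulrC. Qed.

Lemma dotvDl u v w : dotv (u + v) w = dotv u w + dotv v w.
Proof. by rewrite /dotv -big_split; apply: eq_bigr => l _; rewrite !mxE mulrDl. Qed.

Lemma dotvZl (a : R) u w : dotv (a *: u) w = a * dotv u w.
Proof. by rewrite /dotv mulr_sumr; apply: eq_bigr => l _; rewrite !mxE mulrA. Qed.

Lemma dotvNl u w : dotv (- u) w = - dotv u w.
Proof. by rewrite -scaleN1r dotvZl mulN1r. Qed.

Lemma dotvBl u v w : dotv (u - v) w = dotv u w - dotv v w.
Proof. by rewrite dotvDl dotvNl. Qed.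

Lemma dotvDr u v w : dotv w (u + v) = dotv w u + dotv w v.
Proof. by rewrite !(dotvC w) dotvDl. Qed.
Lemma dotvZr (a : R) u w : dotv w (a *: u) = a * dotv w u.
Proof. by rewrite !(dotvC w) dotvZl. Qed.
Lemma dotvBr u v w : dotv w (u - v) = dotv w u - dotv w v.
Proof. by rewrite !(dotvC w) dotvBl. Qed.

Lemma dotv_suml (m : nat) (a : 'I_m -> R) (c : 'I_m -> 'cV[R]_d) w :
  dotv (\sum_(j < m) a j *: c j) w = \sum_(j < m) a j * dotv (c j) w.
Proof.
elim/big_ind2: _ => //.
- by rewrite /dotv big1 // => l _; rewrite mxE mul0r.
- by move=> x1 y1 x2 y2 <- <-; rewrite dotvDl.
- by move=> j _; rewrite dotvZl.
Qed.

Lemma dotv_ge0 u : 0 <= dotv u u.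
Proof. by apply: sumr_ge0 => l _; rewrite -expr2 sqr_ge0. Qed.

Lemma norm2_sq u : norm2 u ^+ 2 = dotv u u.
Proof. by rewrite /norm2 sqr_sqrtr // dotv_ge0. Qed.

Lemma norm2_ge0 u : 0 <= norm2 u.
Proof. exact: sqrtr_ge0. Qed.

Lemma cs_unit u h : norm2 h = 1 -> - norm2 u <= dotv u h.
Proof.
move=> h1; have hh : dotv h h = 1 by rewrite -norm2_sq h1 expr1n.
set c := dotv u h.
have := dotv_ge0 (u - c *: h).
rewrite dotvBl !dotvBr !dotvZl !dotvZr hh (dotvC h u) -/c -norm2_sq => H.
have := norm2_ge0 u; nra.
Qed.

Lemma dot_le u v : dotv u v <= (dotv u u + dotv v v) / 2.
Proof.
have := dotv_ge0 (u - v); rewrite dotvBl !dotvBr (dotvC v u) => H; lra.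
Qed.

Lemma dot_sub_le u v : dotv (u - v) (u - v) <= 2 * dotv u u + 2 * dotv v v.
Proof.
have := dotv_ge0 (u + v); rewrite dotvBl !dotvBr !dotvDl !dotvDr (dotvC v u) => H; lra.
Qed.


Lemma dotvNr u w : dotv w (- u) = - dotv w u.
Proof. by rewrite !(dotvC w) dotvNl. Qed.

Lemma dot_expand u v (t : R) :
  dotv (u - t *: v) (u - t *: v) = dotv u u - 2 * t * dotv u v + t ^+ 2 * dotv v v.
Proof. rewrite dotvBl !dotvBr !dotvZl !dotvZr (dotvC v u); ring. Qed.

End Dot.

Section Conv.
Variable R : realType.
Variables d K : nat.
Variable W : 'M[R]_(d, K).
Variable k : 'I_K.

Lemma sum_delta (j : 'I_K) (F : 'I_K -> R) :
  \sum_(i < K) (i == j)%:R * F i = F j.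
Proof.
rewrite (bigD1 j) //= eqxx mul1r big1 ?addr0 // => i /negbTE ->; by rewrite mul0r.
Qed.

Lemma sum_deltaZ (j : 'I_K) (F : 'I_K -> 'cV[R]_d) :
  \sum_(i < K) (i == j)%:R *: F i = F j.
Proof.
rewrite (bigD1 j) //= eqxx scale1r big1 ?addr0 // => i /negbTE ->; by rewrite scale0r.
Qed.

Lemma conv_vertex (j : 'I_K) : j != k -> conv_others W k (col j W).
Proof.
move=> hjk; exists (fun i => (i == j)%:R); split; first by move=> i; case: (i == j).
split; first by rewrite eq_sym (negbTE hjk).
split.
  by have := sum_delta j (fun _ => 1); under eq_bigr do rewrite mulr1.
by rewrite sum_deltaZ.
Qed.

Lemma conv_step v0 (j : 'I_K) (t : R) : conv_others W k v0 -> j != k ->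
  0 <= t <= 1 -> conv_others W k (v0 + t *: (col j W - v0)).
Proof.
move=> [a [a0 [ak [a1 ->]]]] hjk /andP[t0 t1].
exists (fun i => (1 - t) * a i + t * (i == j)%:R); split.
  move=> i; apply: addr_ge0; apply: mulr_ge0 => //.
  - by rewrite subr_ge0.
split; first by rewrite ak eq_sym (negbTE hjk) !mulr0 addr0.
split.
  rewrite big_split /= -mulr_sumr a1 -mulr_sumr.
  have := sum_delta j (fun _ => 1); under eq_bigr do rewrite mulr1.
  by move=> ->; rewrite !mulr1 subrK.
symmetry; rewrite (eq_bigr (fun i => ((1 - t) * a i) *: col i W + t *: ((i == j)%:R *: col i W))); last first.
  by move=> i _; rewrite scalerDl scalerA.
rewrite big_split /= -scaler_sumr sum_deltaZ.
under eq_bigr do rewrite -scalerA.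
rewrite -scaler_sumr scalerBr scalerBl scale1r.
set S := \sum_(i < K) _.
by rewrite addrAC addrA.
Qed.

Definition Sk := [set x : R | exists w, conv_others W k w /\ x = norm2 (col k W - w)]%classic.

Lemma Sk_lb : has_lbound Sk.
Proof. by exists 0 => x [w [_ ->]]; apply: norm2_ge0. Qed.

Lemma Sk_ne (j : 'I_K) : j != k -> (Sk !=set0)%classic.
Proof. by move=> hjk; exists (norm2 (col k W - col j W)), (col j W); split => //; apply: conv_vertex. Qed.

Lemma dist_ge0 (j : 'I_K) : j != k -> 0 <= dist_others W k.
Proof.
move=> hjk; apply: lb_le_inf.
  by exists (norm2 (col k W - col j W)), (col j W); split => //; apply: conv_vertex.
by move=> x [w [_ ->]]; apply: norm2_ge0.
Qed.

Lemma dist_le w : conv_others W k w -> dist_others W k <= norm2 (col k W - w).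
Proof. by move=> hw; apply: (ge_inf Sk_lb); exists w. Qed.

End Conv.

Section Sep.
Variable R : realType.
Variables d K : nat.
Variable W : 'M[R]_(d, K).
Hypothesis hW : OB W.

Lemma unitW j : dotv (col j W) (col j W) = 1.
Proof. by rewrite -norm2_sq hW expr1n. Qed.

Lemma approx_sep (k j0 : 'I_K) (eps : R) : j0 != k -> 0 < eps ->
  exists h : 'cV[R]_d, norm2 h = 1 /\
    forall j, j != k -> dotv (col j W - col k W) h <= - dist_others W k + eps.
Proof.
move=> hj0 he.
set D := dist_others W k.
have D0 : 0 <= D by move: (hj0); apply: dist_ge0.
case: (lerP D eps) => hDe.
  exists (col k W); split; first exact: hW.
  move=> j _; rewrite dotvBl unitW.
  have := dot_le (col j W) (col k W); rewrite !unitW => H; lra.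
have Dp : 0 < D by lra.
set M := 8 + 2 * (D + 1) ^+ 2.
have Mp : 0 < M by rewrite /M; have := sqr_ge0 (D + 1); lra.
set t := Num.min 1 (eps * D / M).
have tp : 0 < t by rewrite lt_min ltr01 /= divr_gt0 // mulr_gt0.
have t1 : t <= 1 by rewrite ge_min lexx.
have tM : t * M <= eps * D.
  by rewrite -ler_pdivlMr // ge_min lexx orbT.
set eta := Num.min 1 (t * eps * D / (2 * D + 1)).
have etap : 0 < eta by rewrite lt_min ltr01 /= divr_gt0 // ?mulr_gt0 //; lra.
have eta1 : eta <= 1 by rewrite ge_min lexx.
have etaD : eta * (2 * D + 1) <= t * eps * D.
  by rewrite -ler_pdivlMr ?ge_min ?lexx ?orbT //; lra.
have [x [w [hw ->]] hx] : exists2 y, Sk W k y & y < D + eta.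
  apply: inf_lt; first exact: (Sk_ne _ hj0).
  by rewrite -/D; lra.
set u := col k W - w.
set r := norm2 u.
have Dr : D <= r by apply: dist_le.
have hr : r < D + eta := hx.
have rp : 0 < r by lra.
have r2 : dotv u u = r ^+ 2 by rewrite norm2_sq.
exists (r^-1 *: u); split.
  rewrite /norm2 dotvZl dotvZr r2.
  have -> : r^-1 * (r^-1 * r ^+ 2) = 1 by field; lra.
  exact: sqrtr1.
move=> j hjk.
set e := col j W - w.
set c := dotv u e.
have hc : c <= eps * D.
  have hconv := conv_step hw hjk (t := t).
  have := dist_le (hconv _); rewrite -/D.
  have -> : col k W - (w + t *: (col j W - w)) = u - t *: e.
    by apply/matrixP => a b; rewrite !mxE; ring.
  move=> /(_ _) hD.
  have {hD} hD : D <= norm2 (u - t *: e) by apply: hD; rewrite t1 ltW.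
  have hsq : D ^+ 2 <= dotv (u - t *: e) (u - t *: e).
    rewrite -norm2_sq; have := norm2_ge0 (u - t *: e); nra.
  move: hsq; rewrite dot_expand -/c r2 => hsq.
  have hE : dotv e e <= M.
    have -> : e = u - (col k W - col j W) by apply/matrixP => a b; rewrite !mxE; ring.
    have h1 := dot_sub_le u (col k W - col j W).
    have h2 := dot_sub_le (col k W) (col j W).
    rewrite !unitW in h2; rewrite r2 in h1.
    have : r ^+ 2 <= (D + 1) ^+ 2.
      have : r <= D + 1 by lra.
      nra.
    rewrite /M; lra.
  have h3 : r ^+ 2 - D ^+ 2 <= t * eps * D.
    have : (r - D) * (r + D) <= eta * (2 * D + 1).
      apply: ler_pM; lra.
    lra.
  have h4 : t * (t * dotv e e) <= t * (eps * D).
    apply: ler_wpM2l; first lra.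
    apply: le_trans tM; apply: ler_wpM2l; lra.
  have h5 : t * (2 * c) <= t * (2 * (eps * D)) by lra.
  move: h5; rewrite ler_pM2l //; lra.
have -> : col j W - col k W = e - u by apply/matrixP => a b; rewrite !mxE; ring.
rewrite dotvZr dotvBl (dotvC e u) -/c r2.
rewrite mulrC ler_pdivrMr //.
have : eps * D <= eps * r by apply: ler_wpM2l; lra.
nra.
Qed.

End Sep.

Section Main.
Variable R : realType.
Variables d K n : nat.
Hypothesis hK : (2 <= K)%N.
Hypothesis hn : (1 <= n)%N.

Lemma other (k : 'I_K) : exists j : 'I_K, j != k.
Proof.
have h0 : (0 < K)%N by apply: leq_trans hK.
pose o0 := Ordinal h0; pose o1 := Ordinal hK.
case: (eqVneq o0 k) => [<-|]; last by exists o0.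
by exists o1; apply/eqP => /(congr1 val).
Qed.

Lemma norm2N (u v : 'cV[R]_d) : norm2 (u - v) = norm2 (v - u).
Proof.
by rewrite /norm2 -opprB dotvNl dotvNr opprK.
Qed.

Lemma HM_ub (W : 'M[R]_(d, K)) (H : 'M[R]_(d, K * n)) : OB W -> OB H ->
  forall k i k', k' != k ->
  dotv (col k' W - col k W) (hcol H k i) <= HardMax W H.
Proof.
move=> hW hH k i k' hk; apply: ub_le_sup; last by exists k, i, k'.
exists ((4 + 1) / 2) => _ [a [b [c [_ ->]]]].
have h1 := dot_le (col c W - col a W) (hcol H a b).
have h2 := dot_sub_le (col c W) (col a W).
rewrite !unitW // in h2.
have h3 : dotv (hcol H a b) (hcol H a b) = 1 by rewrite -norm2_sq hH expr1n.
rewrite h3 in h1; lra.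
Qed.

Lemma rho_le (W : 'M[R]_(d, K)) k : rho_ovr W <= dist_others W k.
Proof.
apply: ge_inf; last by exists k.
exists 0 => _ [k' ->]; have [j hj] := other k'; exact: (dist_ge0 _ hj).
Qed.

Lemma hardmax_lb (W : 'M[R]_(d, K)) (H : 'M[R]_(d, K * n)) : OB W -> OB H ->
  - rho_ovr W <= HardMax W H.
Proof.
move=> hW hH; rewrite lerNl; apply: lb_le_inf.
  have h0 : (0 < K)%N by apply: leq_trans hK.
  by exists (dist_others W (Ordinal h0)), (Ordinal h0).
move=> _ [k ->]; have [j0 hj0] := other k.
apply: lb_le_inf; first exact: (Sk_ne _ hj0).
move=> _ [w [[a [a0 [ak [a1 hw]]]] ->]].
pose i0 : 'I_n := Ordinal hn.
have hh : norm2 (hcol H k i0) = 1 by apply: hH.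
have := cs_unit (w - col k W) hh; rewrite norm2N.
suff : dotv (w - col k W) (hcol H k i0) <= HardMax W H by move=> ? ?; lra.
have -> : dotv (w - col k W) (hcol H k i0) =
    \sum_(j < K) a j * dotv (col j W - col k W) (hcol H k i0).
  rewrite hw dotvBl dotv_suml.
  under [RHS]eq_bigr do rewrite dotvBl mulrBr.
  by rewrite sumrB -mulr_suml a1 mul1r.
have -> : HardMax W H = \sum_(j < K) a j * HardMax W H by rewrite -mulr_suml a1 mul1r.
apply: ler_sum => j _.
case: (eqVneq j k) => [->|hjk]; first by rewrite ak !mul0r.
by apply: ler_wpM2l => //; apply: HM_ub.
Qed.

Lemma hardmax_ub (W : 'M[R]_(d, K)) (eps : R) : OB W -> 0 < eps ->
  exists H : 'M[R]_(d, K * n), OB H /\ HardMax W H <= - rho_ovr W + eps.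
Proof.
move=> hW he.
have : forall k : 'I_K, exists h : 'cV[R]_d, norm2 h = 1 /\
    forall j, j != k -> dotv (col j W - col k W) h <= - dist_others W k + eps.
  by move=> k; have [j0 hj0] := other k; exact: (approx_sep hW hj0 he).
move=> /choice [f hf].
pose H := \matrix_(l, c) f (enum_val (cast_ord (esym (@mxvec_cast K n)) c)).1 l 0.
have hHc : forall k i, hcol H k i = f k.
  move=> k i; apply/matrixP => l b; rewrite !mxE /mxvec_index cast_ordK enum_rankK.
  by rewrite (ord1 b).
exists H; split.
  move=> c; case/mxvec_indexP: c => k i; change (norm2 (hcol H k i) = 1).
  by rewrite hHc; exact: (hf k).1.
apply: ge_sup.
  have h0 : (0 < K)%N by apply: leq_trans hK.
  have [j hj] := other (Ordinal h0).
  by exists (dotv (col j W - col (Ordinal h0) W) (hcol H (Ordinal h0) (Ordinal hn))),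
    (Ordinal h0), (Ordinal hn), j.
move=> _ [k [i [k' [hk ->]]]]; rewrite hHc.
have := (hf k).2 k' hk; have := rho_le W k; lra.
Qed.

End Main.

Unset Implicit Arguments.

Theorem mainTheorem2 (R : realType) (d K n : nat)
  (hd : (1 <= d)%N) (hK : (2 <= K)%N) (hn : (1 <= n)%N)
  (Wstar : 'M[R]_(d, K)) (Hstar : 'M[R]_(d, K * n)) :
  hardmax_optimal Wstar Hstar -> softmax_code Wstar.
Proof.
move=> [hW [hH opt]]; split => // W' hW'.
apply/ler_addgt0Pr => e he.
have [H' [hH' hub]] := hardmax_ub hK hn hW' he.
have hlb := hardmax_lb hK hn hW hH.
have := opt W' H' hW' hH'.
lra.
Qed.
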